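(* For integers $m\ge 1$ and $n\ge 0$ let $$D_n(m)=\sum_{k=0}^{n}\binom{n-k}{k}^{m},$$ where $\binom{a}{b}=0$ whenever $b>a$. Let $(F_j)_{j\ge0}$ be the Fibonacci numbers ($F_0=0$, $F_1=1$, $F_j=F_{j-1}+F_{j-2}$) and $(L_j)_{j\ge0}$ the Lucas numbers ($L_0=2$, $L_1=1$, $L_j=L_{j-1}+L_{j-2}$). Then for every positive integer $m$, $$\lim_{n\to\infty}\frac{D_{n+1}(m)}{D_n(m)}=\frac{F_m\sqrt5+L_m}{2}.$$
   Context: $D_n(m)$ is the number of $m$-tuples of tilings of a $2\times n$ strip by dominoes in which all tilings have the same number of vertical dominoes; equivalently, the number of $m$-tuples of compositions of $n$ with parts in $\{1,2\}$ all having the same number of parts. *)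

(* Defs.v *)
From HB Require Import structures.
From mathcomp Require Import all_boot all_order all_algebra.
From mathcomp Require Import all_classical all_reals all_analysis.
Set Implicit Arguments. Unset Strict Implicit. Unset Printing Implicit Defensive.
Import Order.TTheory GRing.Theory Num.Theory.

Definition D (n m : nat) : nat := \sum_(k < n.+1) 'C(n - k, k) ^ m.

Fixpoint fib (j : nat) : nat :=
  match j with
  | 0 => 0
  | 1 => 1
  | S ((S i) as i1) => fib i1 + fib i
  end.

Fixpoint lucas (j : nat) : nat :=
  match j with
  | 0 => 2
  | 1 => 1
  | S ((S i) as i1) => lucas i1 + lucas i
  end.

(* Main.v *)
Set Warnings "-all".
Require Import Defs.
From HB Require Import structures.
From mathcomp Require Import all_boot all_order all_algebra.
From mathcomp Require Import all_classical all_reals all_analysis.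
From mathcomp Require Import zify ring lra.
Import Order.TTheory GRing.Theory Num.Theory numFieldTopology.Exports numFieldNormedType.Exports.
Local Open Scope classical_set_scope.
Local Open Scope ring_scope.

Lemma idA (n k : nat) :
  ((n.+1 - k) * 'C(n - k, k) = (n.+1 - k - k) * 'C(n.+1 - k, k))%N.
Proof.
case: (leqP k n) => hk.
  have -> : (n.+1 - k = (n - k).+1)%N by lia.
  by rewrite -mul_bin_down.
have -> : (n.+1 - k = 0)%N by lia.
by rewrite !mul0n.
Qed.

Lemma idB (n k : nat) : (0 < k)%N ->
  (k * 'C(n.+1 - k, k) = (n.+1 - k - k.-1) * 'C(n - k.-1, k.-1))%N.
Proof.
case: k => // k _ /=.
have -> : (n - k = n.+1 - k.+1)%N by lia.
by rewrite mul_bin_left.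
Qed.

Lemma tlow (R : realFieldType) (n k : nat) (q : R) : 0 <= q ->
  q * (n.+1 - k - k)%:R <= (n.+1 - k)%:R ->
  q * ('C(n - k, k))%:R <= ('C(n.+1 - k, k))%:R.
Proof.
move=> q0 h.
have e := congr1 (fun x : nat => x%:R : R) (idA n k); rewrite /= !natrM in e.
case: (posnP 'C(n - k, k)) => [->|tp]; first by rewrite mulr0.
have hp : (0 < n.+1 - k - k)%N by move: tp; rewrite bin_gt0; lia.
rewrite -(@ler_pM2l _ (n.+1 - k - k)%:R) ?ltr0n // -e mulrCA.
by rewrite mulrA ler_wpM2r.
Qed.

Lemma tlowB (R : realFieldType) (n k : nat) (q : R) : 0 <= q -> (0 < k)%N ->
  q * k%:R <= (n.+1 - k - k.-1)%:R ->
  q * ('C(n - k.-1, k.-1))%:R <= ('C(n.+1 - k, k))%:R.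
Proof.
move=> q0 k0 h.
have e := congr1 (fun x : nat => x%:R : R) (@idB n k k0); rewrite /= !natrM in e.
rewrite -(@ler_pM2l _ k%:R) ?ltr0n // e mulrCA.
by rewrite mulrA ler_wpM2r.
Qed.

Lemma tup (R : realFieldType) (n k : nat) (Q : R) : 0 <= Q ->
  (n.+1 - k)%:R <= Q * (n.+1 - k - k)%:R ->
  ('C(n.+1 - k, k))%:R <= Q * ('C(n - k, k))%:R.
Proof.
move=> Q0 h.
have e := congr1 (fun x : nat => x%:R : R) (idA n k); rewrite /= !natrM in e.
case: (posnP (n.+1 - k - k)) => [h0|hp].
  rewrite h0 mulr0 lern0 in h.
  have hk : (n.+1 <= k)%N by move/eqP: h; lia.
  move/eqP: h => ->.
  rewrite bin0n; case: k hk {e h0} => // k _ /=.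
  by rewrite mulr_ge0.
rewrite -(@ler_pM2l _ (n.+1 - k - k)%:R) ?ltr0n // -e mulrCA.
by rewrite mulrA ler_wpM2r.
Qed.

Lemma tupB (R : realFieldType) (n k : nat) (Q : R) : 0 <= Q -> (0 < k)%N ->
  (n.+1 - k - k.-1)%:R <= Q * k%:R ->
  ('C(n.+1 - k, k))%:R <= Q * ('C(n - k.-1, k.-1))%:R.
Proof.
move=> Q0 k0 h.
have e := congr1 (fun x : nat => x%:R : R) (@idB n k k0); rewrite /= !natrM in e.
rewrite -(@ler_pM2l _ k%:R) ?ltr0n // e mulrCA.
by rewrite mulrA ler_wpM2r.
Qed.

Lemma pw (R : realFieldType) (m : nat) (x y : R) : 0 <= x -> x <= y -> x ^+ m <= y ^+ m.
Proof. by move=> x0 xy; apply: lerXn2r; rewrite ?nnegrE // (le_trans x0 xy). Qed.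

Definition TT (R : realFieldType) (m n k : nat) : R := ('C(n - k, k))%:R ^+ m.
Definition UU (R : realFieldType) (m n k : nat) : R := ('C(n.+1 - k, k))%:R ^+ m.
Definition AA (R : realFieldType) (m n : nat) : R := \sum_(0 <= k < n.+2) TT R m n k.
Definition AA' (R : realFieldType) (m n : nat) : R := \sum_(0 <= k < n.+2) UU R m n k.

Lemma TT_ge0 R m n k : 0 <= TT R m n k.
Proof. by rewrite /TT exprn_ge0. Qed.
Lemma UU_ge0 R m n k : 0 <= UU R m n k.
Proof. by rewrite /UU exprn_ge0. Qed.

Lemma D_AA (R : realFieldType) m n : (0 < m)%N -> (D n m)%:R = AA R m n.
Proof.
move=> m0; rewrite /D /AA big_nat_recr //= natr_sum big_mkord.
have -> : TT R m n n.+1 = 0.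
  rewrite /TT; have -> : (n - n.+1 = 0)%N by lia. rewrite bin0n /=. case: m m0 => // m _. by rewrite expr0n.
rewrite addr0; apply: eq_bigr => k _; by rewrite /TT natrX.
Qed.

Lemma D_AA' (R : realFieldType) m n : (D n.+1 m)%:R = AA' R m n.
Proof.
rewrite /D /AA' natr_sum big_mkord; apply: eq_bigr => k _; by rewrite /UU natrX.
Qed.

Lemma cut_low (R : realFieldType) m n c (q : R) : 0 <= q -> (0 < c <= n.+1)%N ->
  (forall k, (c <= k)%N -> q * (n.+1 - k - k)%:R <= (n.+1 - k)%:R) ->
  (forall k, (0 < k < c)%N -> q * k%:R <= (n.+1 - k - k.-1)%:R) ->
  q ^+ m * (AA R m n - TT R m n c.-1) <= AA' R m n.
Proof.
move=> q0 /andP[c0 cn] hA hB.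
case: c c0 cn hA hB => // c _ cn hA hB /=.
have eT : AA R m n = \sum_(0 <= k < c) TT R m n k + TT R m n c + \sum_(c.+1 <= k < n.+2) TT R m n k.
  rewrite /AA (big_cat_nat _ (n:=c.+1)) //=; last by lia.
  by rewrite big_nat_recr.
have eU : AA' R m n = \sum_(0 <= k < c.+1) UU R m n k + \sum_(c.+1 <= k < n.+2) UU R m n k.
  by rewrite /AA' (big_cat_nat _ (n:=c.+1)) //=; lia.
rewrite eT eU.
have -> : forall a b d : R, a + d + b - d = a + b by move=> *; ring.
rewrite mulrDr; apply: lerD.
  rewrite big_nat_recl // big_distrr /=; rewrite -[X in X <= _]add0r; apply: lerD; first exact: UU_ge0.
  apply: ler_sum_nat => i /andP[_ hi].
  rewrite /TT /UU -exprMn; apply: pw; first by rewrite mulr_ge0.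
  have := @tlowB R n i.+1 q q0 isT (hB i.+1 _); rewrite /=; apply; lia.
rewrite big_distrr /=; apply: ler_sum_nat => i /andP[hi _].
rewrite /TT /UU -exprMn; apply: pw; first by rewrite mulr_ge0.
by apply: tlow => //; apply: hA.
Qed.

Lemma cut_up (R : realFieldType) m n c (Q : R) : 0 <= Q -> (0 < c <= n.+1)%N ->
  (forall k, (k < c)%N -> (n.+1 - k)%:R <= Q * (n.+1 - k - k)%:R) ->
  (forall k, (c <= k)%N -> (n.+1 - k - k.-1)%:R <= Q * k%:R) ->
  AA' R m n <= Q ^+ m * (AA R m n + TT R m n c.-1).
Proof.
move=> Q0 /andP[c0 cn] hA hB.
case: c c0 cn hA hB => // c _ cn hA hB /=.
have eU : AA' R m n = \sum_(0 <= k < c.+1) UU R m n k + \sum_(c.+1 <= k < n.+2) UU R m n k.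
  by rewrite /AA' (big_cat_nat _ (n:=c.+1)) //=; lia.
have e2 : \sum_(c.+1 <= k < n.+2) Q ^+ m * TT R m n k.-1 = \sum_(c <= k < n.+1) Q ^+ m * TT R m n k.
  by rewrite big_add1.
have eT : \sum_(0 <= k < c.+1) TT R m n k + \sum_(c <= k < n.+1) TT R m n k =
   \sum_(0 <= k < n.+1) TT R m n k + TT R m n c.
  rewrite big_nat_recr //= (big_cat_nat _ (n:=c) (m:=0) (p:=n.+1)) //=; last by lia.
  ring.
have eA : AA R m n = \sum_(0 <= k < n.+1) TT R m n k + TT R m n n.+1.
  by rewrite /AA big_nat_recr.
rewrite eU.
apply: (le_trans (y := Q ^+ m * (\sum_(0 <= k < c.+1) TT R m n k) +
    Q ^+ m * (\sum_(c <= k < n.+1) TT R m n k))).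
  apply: lerD.
    rewrite big_distrr /=; apply: ler_sum_nat => i /andP[_ hi].
    rewrite /TT /UU -exprMn; apply: pw; first exact: ler0n.
    by apply: tup => //; apply: hA.
  rewrite big_distrr /= -e2; apply: ler_sum_nat => i /andP[hi _].
  rewrite /TT /UU -exprMn; apply: pw; first exact: ler0n.
  have := @tupB R n i Q Q0 (leq_ltn_trans (leq0n c) hi) (hB i hi); apply.
rewrite -mulrDr eT eA; apply: ler_wpM2l; first exact: exprn_ge0.
rewrite lerD2r lerDl; exact: TT_ge0.
Qed.

Lemma subsumT (R : realFieldType) m n a L : (a + L <= n.+2)%N ->
  \sum_(0 <= i < L) TT R m n (a + i) <= AA R m n.
Proof.
move=> h.
have -> : \sum_(0 <= i < L) TT R m n (a + i) = \sum_(a <= j < a + L) TT R m n j.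
  have h2 := big_addn 0 (a + L) a xpredT (fun j => TT R m n j); rewrite add0n in h2.
  rewrite h2; have -> : (a + L - a = L)%N by lia.
  by apply: eq_bigr => i _; rewrite addnC.
rewrite /AA (big_cat_nat _ (n:=a) (m:=0) (p:=n.+2)) //=; last by lia.
rewrite (big_cat_nat _ (n:=a + L) (m:=a) (p:=n.+2)) //=; last by lia.
rewrite addrA addrC addrA lerDr; apply: addr_ge0; apply: sumr_ge0 => *; exact: TT_ge0.
Qed.

Lemma avg_low (R : realFieldType) m n c0 L (q : R) : 0 <= q -> (0 < c0)%N ->
  (c0 + L <= n.+2)%N ->
  (forall i, (i < L)%N ->
   (forall k, (c0 + i <= k)%N -> q * (n.+1 - k - k)%:R <= (n.+1 - k)%:R) /\
   (forall k, (0 < k < c0 + i)%N -> q * k%:R <= (n.+1 - k - k.-1)%:R)) ->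
  q ^+ m * (L%:R - 1) * AA R m n <= L%:R * AA' R m n.
Proof.
move=> q0 c00 hL hc.
have e1 : L%:R * AA' R m n = \sum_(0 <= i < L) AA' R m n.
  by rewrite sumr_const_nat subn0 mulr_natl.
have e2 : \sum_(0 <= i < L) q ^+ m * (AA R m n - TT R m n (c0.-1 + i)) =
   q ^+ m * (L%:R * AA R m n - \sum_(0 <= i < L) TT R m n (c0.-1 + i)).
  by rewrite -big_distrr /= sumrB sumr_const_nat subn0 mulr_natl.
rewrite e1; apply: (le_trans _ (y := \sum_(0 <= i < L) q ^+ m * (AA R m n - TT R m n (c0.-1 + i)))).
  rewrite e2 -mulrA; apply: ler_wpM2l; first exact: exprn_ge0.
  rewrite mulrBl mul1r; apply: lerB => //; apply: subsumT; lia.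
apply: ler_sum_nat => i /andP[_ hi].
have [hA hB] := hc i hi.
have -> : (c0.-1 + i = (c0 + i).-1)%N by lia.
apply: cut_low => //; lia.
Qed.

Lemma avg_up (R : realFieldType) m n c0 L (Q : R) : 0 <= Q -> (0 < c0)%N ->
  (c0 + L <= n.+2)%N ->
  (forall i, (i < L)%N ->
   (forall k, (k < c0 + i)%N -> (n.+1 - k)%:R <= Q * (n.+1 - k - k)%:R) /\
   (forall k, (c0 + i <= k)%N -> (n.+1 - k - k.-1)%:R <= Q * k%:R)) ->
  L%:R * AA' R m n <= Q ^+ m * (L%:R + 1) * AA R m n.
Proof.
move=> Q0 c00 hL hc.
have e1 : L%:R * AA' R m n = \sum_(0 <= i < L) AA' R m n.
  by rewrite sumr_const_nat subn0 mulr_natl.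
have e2 : \sum_(0 <= i < L) Q ^+ m * (AA R m n + TT R m n (c0.-1 + i)) =
   Q ^+ m * (L%:R * AA R m n + \sum_(0 <= i < L) TT R m n (c0.-1 + i)).
  by rewrite -big_distrr /= big_split sumr_const_nat subn0 mulr_natl.
rewrite e1; apply: (le_trans (y := \sum_(0 <= i < L) Q ^+ m * (AA R m n + TT R m n (c0.-1 + i)))).
  apply: ler_sum_nat => i /andP[_ hi].
  have [hA hB] := hc i hi.
  have -> : (c0.-1 + i = (c0 + i).-1)%N by lia.
  apply: cut_up => //; lia.
rewrite e2 -mulrA; apply: ler_wpM2l; first exact: exprn_ge0.
rewrite mulrDl mul1r lerD2l; apply: subsumT; lia.
Qed.

Lemma condsL (R : realFieldType) n c0 L (q : R) : 1 <= q ->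
  (q - 1) * (n.+1)%:R <= (2 * q - 1) * c0%:R ->
  (q + 2) * (c0 + L)%:R <= (n.+2)%:R ->
  forall i, (i < L)%N ->
   (forall k, (c0 + i <= k)%N -> q * (n.+1 - k - k)%:R <= (n.+1 - k)%:R) /\
   (forall k, (0 < k < c0 + i)%N -> q * k%:R <= (n.+1 - k - k.-1)%:R).
Proof.
move=> q1 H1 H2 i iL; split.
  move=> k hk.
  case: (leqP (k + k) n.+1) => h2k; last first.
    have -> : (n.+1 - k - k = 0)%N by lia.
    by rewrite mulr0 ler0n.
  rewrite -subnDA !natrB //; last by lia.
  rewrite natrD.
  have hk' : (c0%:R : R) <= k%:R by rewrite ler_nat; lia.
  have := mulr_ge0 (_ : 0 <= 2 * q - 1) (_ : 0 <= k%:R - c0%:R :> R).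
  rewrite -!natr1 in H1 *.
  move=> /(_ ltac:(lra) ltac:(lra)) h.
  nra.
move=> k /andP[k0 hk].
have hk' : ((c0 + L)%:R : R) >= k%:R by rewrite ler_nat; lia.
have hk2 : (k.*2 <= n.+2)%N.
  rewrite -(ler_nat R) -mul2n natrM.
  have : 0 <= (q - 0) * ((c0 + L)%:R - k%:R) :> R by apply: mulr_ge0; lra.
  rewrite natrD in hk' H2 *; move: (ler0n R k) => ?; nra.
have -> : (n.+1 - k - k.-1 = n.+2 - k.*2)%N by lia.
rewrite natrB // -mul2n natrM.
have : 0 <= (q + 2) * ((c0 + L)%:R - k%:R) :> R by apply: mulr_ge0; lra.
rewrite natrD in hk' H2 *; nra.
Qed.

Lemma condsU (R : realFieldType) n c0 L (Q : R) : 1 <= Q ->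
  (n.+2)%:R <= (Q + 2) * c0%:R ->
  (2 * Q - 1) * (c0 + L)%:R <= (Q - 1) * (n.+1)%:R ->
  forall i, (i < L)%N ->
   (forall k, (k < c0 + i)%N -> (n.+1 - k)%:R <= Q * (n.+1 - k - k)%:R) /\
   (forall k, (c0 + i <= k)%N -> (n.+1 - k - k.-1)%:R <= Q * k%:R).
Proof.
move=> Q1 H1 H2 i iL; split.
  move=> k hk.
  have hk' : (k%:R : R) <= (c0 + L)%:R by rewrite ler_nat; lia.
  have hk2 : (k.*2 <= n)%N.
    rewrite -ltnS -(ltr_nat R) -mul2n natrM.
    have : 0 <= (2 * Q - 1) * ((c0 + L)%:R - k%:R) :> R by apply: mulr_ge0; lra.
    have N1 : 1 <= (n.+1)%:R :> R by rewrite ler1n.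
    move=> hp; rewrite ltNge; apply/negP => hh.
    have : 0 <= (2 * Q - 1) * (2 * k%:R - (n.+1)%:R) :> R by apply: mulr_ge0; lra.
    nra.
  rewrite -subnDA !natrB //; try lia.
  rewrite natrD.
  have : 0 <= (2 * Q - 1) * ((c0 + L)%:R - k%:R) :> R by apply: mulr_ge0; lra.
  rewrite -!natr1 in H2 *; move: (ler0n R k) => ?; nra.
move=> k hk.
have hk' : (c0%:R : R) <= k%:R by rewrite ler_nat; lia.
case: (leqP k.*2 n.+2) => h2k; last first.
  have -> : (n.+1 - k - k.-1 = 0)%N by lia.
  by rewrite mulr_ge0 // ?ler0n; lra.
have k0 : (0 < k)%N.
  case: (posnP k) => // k0'.
  have c00 : c0 = 0%N by lia.
  by move: H1; rewrite c00 mulr0 lern0.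
have -> : (n.+1 - k - k.-1 = n.+2 - k.*2)%N by lia.
rewrite natrB // -mul2n natrM.
have : 0 <= (Q + 2) * (k%:R - c0%:R) :> R by apply: mulr_ge0; lra.
nra.
Qed.

Lemma archi_nat (R : realType) (y : R) : exists N : nat, y < N%:R.
Proof.
case: (lerP 0 y) => hy; last by exists 0%N.
by exists (Num.Def.trunc y).+1; apply: truncnS_gt.
Qed.

Lemma ev_low (R : realType) m (q : R) L : 1 <= q -> q ^+ 2 < q + 1 ->
  exists N : nat, forall n, (N <= n)%N ->
    q ^+ m * (L%:R - 1) * AA R m n <= L%:R * AA' R m n.
Proof.
move=> q1 qphi.
set g := q + 1 - q ^+ 2.
have g0 : 0 < g by rewrite /g; lra.
have [N hN] := @archi_nat R ((2 * q - 1) * (q + 2) * (1 + L%:R) / g).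
exists N => n hn.
have hNn : (N%:R : R) <= n%:R by rewrite ler_nat.
set y := (q - 1) * (n.+1)%:R / (2 * q - 1).
have q21 : 0 < 2 * q - 1 by lra.
have hy : (2 * q - 1) * y = (q - 1) * (n.+1)%:R.
  by rewrite /y mulrC divfK //; lra.
have y0 : 0 <= y by rewrite /y divr_ge0 ?mulr_ge0 //; lra.
set c0 := (Num.Def.trunc y).+1.
have [c0a c0b] : y < c0%:R /\ c0%:R <= y + 1.
  split; first exact: truncnS_gt.
  by rewrite /c0 -natr1 lerD2r truncn_le.
have H1 : (q - 1) * (n.+1)%:R <= (2 * q - 1) * c0%:R.
  rewrite -hy ler_wpM2l //; lra.
have gN : (2 * q - 1) * (q + 2) * (1 + L%:R) < (n.+1)%:R * g.
  rewrite -ltr_pdivrMr //; apply: (lt_le_trans hN).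
  by rewrite -natr1; lra.
have H2 : (q + 2) * (c0 + L)%:R <= (n.+2)%:R.
  rewrite -(@ler_pM2l _ (2 * q - 1)) //.
  have e1 : (2 * q - 1) * ((q + 2) * (c0 + L)%:R) <=
            (q + 2) * ((2 * q - 1) * y) + (2 * q - 1) * (q + 2) * (1 + L%:R).
    rewrite natrD.
    have : 0 <= (2 * q - 1) * (q + 2) * (y + 1 - c0%:R).
      by apply: mulr_ge0; [apply: mulr_ge0|]; lra.
    nra.
  apply: (le_trans e1); rewrite hy.
  rewrite -[(n.+2)%:R]natr1 -[(n.+1)%:R]natr1 /g in gN *.
  have : 0 <= q - 1 by lra.
  nra.
have hcL : (c0 + L <= n.+2)%N.
  rewrite -(ler_nat R); apply: le_trans H2.
  by rewrite ler_peMl //; lra.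
apply: (@avg_low R m n c0 L q) => //; first lra.
exact: condsL.
Qed.

Lemma ev_up (R : realType) m (Q : R) L : 1 <= Q -> Q + 1 < Q ^+ 2 ->
  exists N : nat, forall n, (N <= n)%N ->
    L%:R * AA' R m n <= Q ^+ m * (L%:R + 1) * AA R m n.
Proof.
move=> Q1 Qphi.
set g := Q ^+ 2 - Q - 1.
have g0 : 0 < g by rewrite /g; lra.
have [N hN] := @archi_nat R (((2 * Q - 1) + (2 * Q - 1) * (1 + L%:R) * (Q + 2)) / g).
exists N => n hn.
have hNn : (N%:R : R) <= n%:R by rewrite ler_nat.
set y := (n.+2)%:R / (Q + 2).
have Q2 : 0 < Q + 2 by lra.
have hy : (Q + 2) * y = (n.+2)%:R.
  by rewrite /y mulrC divfK //; lra.
have y0 : 0 <= y by rewrite /y divr_ge0 //; lra.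
set c0 := (Num.Def.trunc y).+1.
have [c0a c0b] : y < c0%:R /\ c0%:R <= y + 1.
  split; first exact: truncnS_gt.
  by rewrite /c0 -natr1 lerD2r truncn_le.
have H1 : (n.+2)%:R <= (Q + 2) * c0%:R.
  rewrite -hy ler_wpM2l //; lra.
have gN : (2 * Q - 1) + (2 * Q - 1) * (1 + L%:R) * (Q + 2) < (n.+1)%:R * g.
  rewrite -ltr_pdivrMr //; apply: (lt_le_trans hN).
  by rewrite -natr1; lra.
have Q21 : 0 < 2 * Q - 1 by lra.
have H2 : (2 * Q - 1) * (c0 + L)%:R <= (Q - 1) * (n.+1)%:R.
  rewrite -(@ler_pM2l _ (Q + 2)) //.
  have e1 : (Q + 2) * ((2 * Q - 1) * (c0 + L)%:R) <=
            (2 * Q - 1) * ((Q + 2) * y) + (2 * Q - 1) * (1 + L%:R) * (Q + 2).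
    rewrite natrD.
    have : 0 <= (2 * Q - 1) * (Q + 2) * (y + 1 - c0%:R).
      by apply: mulr_ge0; [apply: mulr_ge0|]; lra.
    nra.
  apply: (le_trans e1); rewrite hy.
  rewrite -[(n.+2)%:R]natr1 -[(n.+1)%:R]natr1 /g in gN *.
  nra.
have hcL : (c0 + L <= n.+2)%N.
  rewrite -(ler_nat R).
  have : ((c0 + L)%:R : R) <= (n.+1)%:R.
    rewrite -(@ler_pM2l _ (2 * Q - 1)) //; apply: (le_trans H2).
    by rewrite ler_wpM2r //; lra.
  by move=> h; apply: (le_trans h); rewrite ler_nat.
apply: (@avg_up R m n c0 L Q) => //; first lra.
exact: condsU.
Qed.

Lemma powdiff (R : realFieldType) m (a b B : R) : 0 <= b -> b <= a -> a <= B -> 1 <= B ->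
  a ^+ m - b ^+ m <= m%:R * B ^+ m * (a - b).
Proof.
move=> b0 ba aB B1; elim: m => [|m IH]; first by rewrite !expr0 subrr mul0r mul0r.
have a0 : 0 <= a by apply: le_trans ba.
have e : a ^+ m.+1 - b ^+ m.+1 = a * (a ^+ m - b ^+ m) + b ^+ m * (a - b).
  by rewrite !exprS; ring.
rewrite e.
have h1 : a * (a ^+ m - b ^+ m) <= B * (m%:R * B ^+ m * (a - b)).
  apply: ler_pM; [done| |done|exact: IH].
  by rewrite subr_ge0 lerXn2r // nnegrE.
have h2 : b ^+ m * (a - b) <= B ^+ m.+1 * (a - b).
  apply: ler_wpM2r; first by rewrite subr_ge0.
  apply: (le_trans (y := B ^+ m)); first by apply: lerXn2r; rewrite ?nnegrE //; [apply: le_trans B1|apply: le_trans ba aB].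
  by rewrite exprS ler_peMl // exprn_ge0 // (le_trans _ B1).
apply: (le_trans (lerD h1 h2)).
rewrite -natr1 exprS le_eqVlt; apply/orP; left; apply/eqP; ring.
Qed.

Lemma phi_pow (R : realType) m :
  ((1 + Num.sqrt 5) / 2 : R) ^+ m = ((fib m)%:R * Num.sqrt 5 + (lucas m)%:R) / 2.
Proof.
set s := Num.sqrt (5 : R).
have s2 : s ^+ 2 = 5 by rewrite /s sqr_sqrtr // ler0n.
suff : forall m, ((1 + s) / 2) ^+ m = ((fib m)%:R * s + (lucas m)%:R) / 2 /\
                 ((1 + s) / 2) ^+ m.+1 = ((fib m.+1)%:R * s + (lucas m.+1)%:R) / 2.
  by move=> /(_ m) [].
elim=> [|k [IH1 IH2]].
  by rewrite !expr0 expr1 /=; split; field.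
split=> //.
have ph2 : ((1 + s) / 2) ^+ 2 = (1 + s) / 2 + 1.
  rewrite expr2; apply/eqP; rewrite -subr_eq0; apply/eqP.
  have -> : (1 + s) / 2 * ((1 + s) / 2) - ((1 + s) / 2 + 1) = (s ^+ 2 - 5) / 4 by field.
  by rewrite s2 subrr mul0r.
have e : ((1 + s) / 2) ^+ k.+2 = ((1 + s) / 2) ^+ k.+1 + ((1 + s) / 2) ^+ k.
  have -> : ((1 + s) / 2) ^+ k.+2 = ((1 + s) / 2) ^+ 2 * ((1 + s) / 2) ^+ k.
    by rewrite !exprS expr0 mulr1 mulrA.
  by rewrite ph2 exprS; ring.
by rewrite e IH1 IH2 /= !natrD; field.
Qed.

Lemma AA_ge1 (R : realFieldType) m n : 1 <= AA R m n.
Proof.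
rewrite /AA big_ltn // {1}/TT subn0 bin0 expr1n -[X in X <= _]addr0 lerD2l.
apply: sumr_ge0 => *; exact: TT_ge0.
Qed.

Theorem proposition1 (R : realType) (m : nat) (hm : (0 < m)%N) :
  (fun n : nat => ((D n.+1 m)%:R / (D n m)%:R : R)) @ \oo -->
    ((((fib m)%:R * Num.sqrt 5 + (lucas m)%:R) / 2 : R) : R).
Proof.
rewrite -phi_pow.
set phi := (1 + Num.sqrt 5) / 2 : R.
have s2 : Num.sqrt (5 : R) ^+ 2 = 5 by rewrite sqr_sqrtr // ler0n.
have s0 : 0 <= Num.sqrt (5 : R) by apply: sqrtr_ge0.
have sgt2 : 2 < Num.sqrt (5 : R).
  have : 0 <= Num.sqrt (5 : R) by [].
  move=> h; rewrite ltNge; apply/negP => h2.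
  have : Num.sqrt (5 : R) ^+ 2 <= 4 by rewrite expr2; nra.
  by rewrite s2; lra.
have sl3 : Num.sqrt (5 : R) < 3.
  rewrite ltNge; apply/negP => h2.
  have : 9 <= Num.sqrt (5 : R) ^+ 2 by rewrite expr2; nra.
  by rewrite s2; lra.
have ph2 : phi ^+ 2 = phi + 1.
  rewrite /phi expr2; apply/eqP; rewrite -subr_eq0; apply/eqP.
  have -> : (1 + Num.sqrt 5) / 2 * ((1 + Num.sqrt 5) / 2) - ((1 + Num.sqrt 5) / 2 + 1)
     = (Num.sqrt (5 : R) ^+ 2 - 5) / 4 by field.
  by rewrite s2 subrr mul0r.
have phil : 3 / 2 < phi by rewrite /phi; lra.
have phiu : phi < 2 by rewrite /phi; lra.
set x := phi ^+ m.
set B := phi + 1.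
have B1 : 1 <= B by rewrite /B; lra.
apply/cvgrPdist_le => e e0.
set K := m%:R * B ^+ m.
have K0 : 0 <= K by rewrite /K mulr_ge0 // exprn_ge0 //; lra.
set d := e / (2 * (K + e + 1)).
have d0 : 0 < d by rewrite /d divr_gt0 //; lra.
have hd : d * (2 * (K + e + 1)) = e.
  by rewrite /d divfK //; apply/eqP => h; lra.
have dKe : K * d <= e / 2.
  have : 0 <= e * d by rewrite mulr_ge0 //; lra.
  nra.
have dh : d <= 1 / 2.
  rewrite leNgt; apply/negP => h.
  have : 0 <= (K + e + 1) * (d - 1/2) by rewrite mulr_ge0 //; lra.
  nra.
set q := phi - d.
set Q := phi + d.
have q1 : 1 <= q by rewrite /q; lra.
have qphi : q ^+ 2 < q + 1.
  have -> : q ^+ 2 = phi ^+ 2 - 2 * phi * d + d * d by rewrite /q expr2; ring.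
  rewrite ph2 /q; nra.
have Q1 : 1 <= Q by rewrite /Q; lra.
have Qphi : Q + 1 < Q ^+ 2.
  have -> : Q ^+ 2 = phi ^+ 2 + 2 * phi * d + d * d by rewrite /Q expr2; ring.
  rewrite ph2 /Q; nra.
have [L hL] := @archi_nat R (2 * B ^+ m / e).
have BL : 2 * B ^+ m < L%:R * e by rewrite -ltr_pdivrMr.
have Bm0 : 0 < B ^+ m by rewrite exprn_gt0 //; lra.
have L0 : 0 < (L%:R : R).
  have : 0 < L%:R * e by lra.
  by rewrite pmulr_lgt0.
have hlo : x - q ^+ m <= K * d.
  have -> : d = phi - q by rewrite /q; ring.
  apply: powdiff; rewrite /q /B; lra.
have hhi : Q ^+ m - x <= K * d.
  have -> : d = Q - phi by rewrite /Q; ring.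
  apply: powdiff; rewrite /Q /B; lra.
have qB : q ^+ m <= B ^+ m by apply: lerXn2r; rewrite ?nnegrE /q /B; lra.
have QB : Q ^+ m <= B ^+ m by apply: lerXn2r; rewrite ?nnegrE /Q /B; lra.
have [N1 h1] := @ev_low R m q L q1 qphi.
have [N2 h2] := @ev_up R m Q L Q1 Qphi.
exists (maxn N1 N2) => // n /=; rewrite geq_max => /andP[hn1 hn2].
rewrite (@D_AA R m n hm) D_AA'.
have A1 := AA_ge1 R m n.
have A0 : 0 < AA R m n by lra.
set r := AA' R m n / AA R m n.
have eA : AA' R m n = r * AA R m n by rewrite /r divfK //; apply/eqP => h; lra.
have l1 := h1 n hn1; have u1 := h2 n hn2.
rewrite eA mulrA ler_pM2r // in l1.
rewrite eA mulrA ler_pM2r // in u1.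
have t1 : L%:R * (x - q ^+ m) <= L%:R * (e / 2).
  by apply: ler_wpM2l; [lra | apply: le_trans hlo dKe].
have t2 : L%:R * (Q ^+ m - x) <= L%:R * (e / 2).
  by apply: ler_wpM2l; [lra | apply: le_trans hhi dKe].
rewrite ler_norml; apply/andP; split.
  rewrite -(ler_pM2l L0); lra.
rewrite -(ler_pM2l L0); lra.
Qed.
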